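(* Let $(V,c)$ be a network satisfying the Yang-type inequality with constant $C_{YT}$. Let $\Omega\subset V$ be finite with Dirichlet eigenvalues $\lambda_1\le\cdots\le\lambda_{|\Omega|}$. If $\lambda_k\le1+C_{YT}$ for some $1\le k<|\Omega|$, then $$\lambda_{k+1}-\lambda_k\le C_{YT}\,\frac{\sum_{i=1}^k(\lambda_i-\lambda_{\min})}{\sum_{i=1}^k(1-\lambda_i)}.$$
   Context: A network is a pair $(V,c)$ with $V$ countable and $c:V\times V\to[0,\infty)$ symmetric with $\pi(x)=\sum_yc(x,y)<\infty$; $P(x,y)=c(x,y)/\pi(x)$ and $\Delta f(x)=\sum_yP(x,y)(f(x)-f(y))$, a bounded self-adjoint operator on $L^2(V,\pi)$ (inner product $\sum_x\pi(x)f(x)\overline{g(x)}$) with spectrum in $[0,2]$; $\lambda_{\min}$ is the bottom of its spectrum. For finite $\Omega\subset V$, the Dirichlet eigenvalues $\lambda_1\le\cdots\le\lambda_{|\Omega|}$ of $\Omega$ are the eigenvalues (with multiplicity) of the compression $\Delta_\Omega f=\mathbf 1_\Omega\cdot\Delta f$ on functions vanishing outside $\Omega$. The network satisfies the Yang-type inequality with constant $C_{YT}$ if for every finite $\Omega\subset V$ and every $k<|\Omega|$: $\sum_{i=1}^k(\lambda_{k+1}-\lambda_i)^2(1-\lambda_i)\le C_{YT}\sum_{i=1}^k(\lambda_{k+1}-\lambda_i)(\lambda_i-\lambda_{\min})$. *)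

(* Defs.v *)
From HB Require Import structures.
From mathcomp Require Import all_boot all_order all_algebra.
From mathcomp Require Import finmap.
From mathcomp Require Import all_classical all_reals.
From mathcomp Require Import esum.
Set Implicit Arguments. Unset Strict Implicit. Unset Printing Implicit Defensive.
Import Order.TTheory GRing.Theory Num.Theory.
Local Open Scope ring_scope.

Section Network.
Variables (R : realType) (V : countType) (c : V -> V -> R).

(** A network: c symmetric, nonnegative, with finite weighted degrees
    pi(x) = sum_y c(x,y) < oo (and pi(x) > 0 so that P is defined). *)
Definition is_network : Prop :=
  [/\ forall x y, c x y = c y x,
      forall x y, 0 <= c x y,
      forall x, (\esum_(y in [set: V]) (c x y)%:E < +oo)%E &
      forall x, 0 < fine (\esum_(y in [set: V]) (c x y)%:E)].

Definition pi (x : V) : R := fine (\esum_(y in [set: V]) (c x y)%:E).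

Definition P (x y : V) : R := c x y / pi x.

(** Matrix of the Dirichlet compression Delta_Omega, in the basis of the
    indicators of the points of Omega (enumerated by enum_fset Omega):
    for f vanishing outside Omega and x in Omega,
    Delta f(x) = f(x) * sum_y P(x,y) - sum_{y in Omega} P(x,y) f(y)
               = f(x) - sum_{y in Omega} P(x,y) f(y)   (since sum_y P(x,y) = 1). *)
Definition dirichlet_matrix (Om : {fset V}) : 'M[R]_(size (enum_fset Om)) :=
  let pt i := tnth (in_tuple (enum_fset Om)) i in
  \matrix_(i, j) ((i == j)%:R - P (pt i) (pt j)).

(** lam is the list of Dirichlet eigenvalues lambda_1 <= ... <= lambda_|Om|
    of Om, with multiplicity: lam is sorted and is the multiset of roots of
    the characteristic polynomial of Delta_Om. (lam`_i is lambda_(i+1).) *)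
Definition dirichlet_eigenvalues (Om : {fset V}) (lam : seq R) : Prop :=
  sorted <=%R lam /\
  char_poly (dirichlet_matrix Om) = \prod_(l <- lam) ('X - l%:P).

Definition energy (S : {fset V}) (f : V -> R) : R :=
  \sum_(x <- enum_fset S)
     pi x * f x * (f x - \sum_(y <- enum_fset S) P x y * f y).
Definition norm2 (S : {fset V}) (f : V -> R) : R :=
  \sum_(x <- enum_fset S) pi x * f x ^+ 2.

(** Bottom of the spectrum of Delta on L^2(V,pi): infimum of the Rayleigh
    quotient <Delta f,f>/<f,f> over nonzero finitely supported f (a dense
    subspace of L^2(V,pi); Delta is bounded and self-adjoint). *)
Definition lambda_min : R :=
  inf [set r : R | exists (S : {fset V}) (f : V -> R),
         [/\ forall x, x \notin S -> f x = 0,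
             exists2 x, x \in S & f x != 0 &
             r = energy S f / norm2 S f]].

Definition yang_type (C : R) : Prop :=
  forall (Om : {fset V}) (lam : seq R), dirichlet_eigenvalues Om lam ->
  forall k : nat, (k < #|` Om|)%N ->
    \sum_(i < k) (lam`_k - lam`_i) ^+ 2 * (1 - lam`_i)
      <= C * \sum_(i < k) (lam`_k - lam`_i) * (lam`_i - lambda_min).

End Network.

(* Main.v *)
Require Import Defs.
From HB Require Import structures.
From mathcomp Require Import all_boot all_order all_algebra.
From mathcomp Require Import finmap.
From mathcomp Require Import all_classical all_reals.
From mathcomp Require Import esum.
From mathcomp Require Import ring lra.
Import Order.TTheory GRing.Theory Num.Theory.
Local Open Scope ring_scope.
Set Implicit Arguments. Unset Strict Implicit.


Lemma n_pi_fin (R : realType) (V : countType) (c : V -> V -> R) x :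
  is_network c -> ((Defs.pi c x)%:E = \esum_(y in [set: V]) (c x y)%:E)%E.
Proof.
case=> _ c0 fin _; rewrite /Defs.pi fineK // ge0_fin_numE //.
by apply: esum_ge0 => y _; rewrite lee_fin.
Qed.

Lemma n_pi_ge_sum (R : realType) (V : countType) (c : V -> V -> R) x (s : seq V) :
  is_network c -> uniq s -> \sum_(y <- s) c x y <= Defs.pi c x.
Proof.
move=> Hn us; rewrite -lee_fin n_pi_fin // -sumEFin.
apply: esum_ge; exists [set` s]%classic; first by split => //; exact: finite_seq.
by rewrite fsbig_seq.
Qed.

Lemma n_pi_gt0 (R : realType) (V : countType) (c : V -> V -> R) x :
  is_network c -> 0 < Defs.pi c x.
Proof. by case=> _ _ _ H; exact: H. Qed.

Lemma n_piP (R : realType) (V : countType) (c : V -> V -> R) x y :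
  is_network c -> Defs.pi c x * Defs.P c x y = c x y.
Proof.
move=> Hn; rewrite /Defs.P mulrC -mulrA mulVf ?mulr1 //.
by rewrite gt_eqF // n_pi_gt0.
Qed.

Lemma n_pi_degen (R : realType) (V : countType) (c : V -> V -> R) x :
  is_network c -> (forall y, y != x -> c x y = 0) -> Defs.pi c x = c x x.
Proof.
move=> Hn H0; apply/eqP; rewrite -(@eqe R) n_pi_fin //.
have c0 : forall y, (0 <= (c x y)%:E)%E by case: Hn => _ ? _ _ y; rewrite lee_fin.
rewrite (esumID [set x]) //= setTI esum_set1 // (@esum1 R V _ _ ); last first.
  by move=> y [_ /eqP yx]; rewrite H0.
by rewrite adde0.
Qed.


Lemma energy_ge0 (R : realType) (V : countType) (c : V -> V -> R) (S : {fset V}) f :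
  is_network c -> 0 <= energy c S f.
Proof.
move=> Hn; have [csym c0 _ _] := Hn; rewrite /energy.
set s := enum_fset S.
have us : uniq s by exact: fset_uniq.
pose g x y := c x y * (f x ^+ 2 - f x * f y).
have -> : \sum_(x <- s) Defs.pi c x * f x * (f x - \sum_(y <- s) Defs.P c x y * f y)
   = \sum_(x <- s) (Defs.pi c x * f x ^+ 2 - \sum_(y <- s) c x y * f x * f y).
  apply: eq_bigr => x _; rewrite mulrBr mulr_sumr expr2 mulrA; congr (_ - _).
  by apply: eq_bigr => y _; rewrite -(n_piP x y Hn); ring.
apply: (@le_trans _ _ (\sum_(x <- s) \sum_(y <- s) g x y)); last first.
  apply: ler_sum => x _.
  have -> : \sum_(y <- s) g x y = (\sum_(y <- s) c x y) * f x ^+ 2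
                                 - \sum_(y <- s) c x y * f x * f y.
    rewrite mulr_suml -sumrB; apply: eq_bigr => y _; rewrite /g; ring.
  rewrite lerD2r; apply: ler_wpM2r; first exact: sqr_ge0.
  exact: n_pi_ge_sum.
have E : \sum_(x <- s) \sum_(y <- s) g x y = \sum_(x <- s) \sum_(y <- s) g y x.
  by rewrite exchange_big.
suff : 0 <= \sum_(x <- s) \sum_(y <- s) g x y + \sum_(x <- s) \sum_(y <- s) g y x.
  by rewrite -E; lra.
rewrite -big_split /=; apply: sumr_ge0 => x _; rewrite -big_split /=.
apply: sumr_ge0 => y _; rewrite /g (csym y x).
have -> : c x y * (f x ^+ 2 - f x * f y) + c x y * (f y ^+ 2 - f y * f x)
   = c x y * (f x - f y) ^+ 2 by ring.
by apply: mulr_ge0 => //; exact: sqr_ge0.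
Qed.


Lemma norm2_ge0 (R : realType) (V : countType) (c : V -> V -> R) S f :
  is_network c -> 0 <= norm2 c S f.
Proof.
move=> Hn; apply: sumr_ge0 => x _; apply: mulr_ge0; last exact: sqr_ge0.
exact/ltW/n_pi_gt0.
Qed.

Definition rayset (R : realType) (V : countType) (c : V -> V -> R) :=
  [set r : R | exists (S : {fset V}) (f : V -> R),
         [/\ forall x, x \notin S -> f x = 0,
             exists2 x, x \in S & f x != 0 &
             r = energy c S f / norm2 c S f]]%classic.

Lemma rayset_ge0 (R : realType) (V : countType) (c : V -> V -> R) r :
  is_network c -> rayset c r -> 0 <= r.
Proof.
move=> Hn [S [f [_ _ ->]]]; apply: divr_ge0; first exact: energy_ge0.
exact: norm2_ge0.
Qed.

Lemma lmin_ge0 (R : realType) (V : countType) (c : V -> V -> R) :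
  is_network c -> 0 <= lambda_min c.
Proof.
move=> Hn; rewrite /lambda_min -/(rayset c).
have [ne|e0] := pselect (rayset c !=set0)%classic.
  apply: lb_le_inf => // r Er; exact: (rayset_ge0 Hn Er).
suff -> : rayset c = set0 by rewrite inf0.
by apply/seteqP; split => // r Er; apply: e0; exists r.
Qed.

Lemma lmin_le (R : realType) (V : countType) (c : V -> V -> R) r :
  is_network c -> rayset c r -> lambda_min c <= r.
Proof.
move=> Hn Er; rewrite /lambda_min -/(rayset c); apply: ge_inf => //.
exists 0 => s Es; exact: (rayset_ge0 Hn Es).
Qed.


Lemma eig_ge_lmin (R : realType) (V : countType) (c : V -> V -> R) (Om : {fset V}) (l : R) :
  is_network c -> root (char_poly (dirichlet_matrix c Om)) l -> lambda_min c <= l.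
Proof.
move=> Hn; have [csym c0 _ _] := Hn.
rewrite -eigenvalue_root_char => /eigenvalueP [v Hv v0].
set s := enum_fset Om.
have us : uniq s by exact: fset_uniq.
pose pt := tnth (in_tuple s).
have inj : injective pt by apply/tuple_uniqP.
have piN0 x : Defs.pi c x != 0 by rewrite gt_eqF // n_pi_gt0.
have bt (F : V -> R) : \sum_(x <- s) F x = \sum_(i < size s) F (pt i).
  by rewrite big_tnth.
pose f x := \sum_(i < size s) (pt i == x)%:R * (v 0 i / Defs.pi c (pt i)).
have fpt j : f (pt j) = v 0 j / Defs.pi c (pt j).
  rewrite /f (bigD1 j) //= eqxx mul1r big1 ?addr0 // => i ij.
  have : pt i != pt j.
    by apply: contra ij => /eqP /inj ->.
  by move/negbTE => ->; rewrite mul0r.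
have fout x : x \notin Om -> f x = 0.
  move=> xO; rewrite /f big1 // => i _; case: eqP => [ei|_]; last by rewrite mul0r.
  by move: xO; rewrite -ei; rewrite mem_tnth.
have eig j : \sum_(i < size s) v 0 i * Defs.P c (pt i) (pt j) = (1 - l) * v 0 j.
  have := congr1 (fun M : 'M[R]_(1, size s) => M 0 j) Hv; rewrite !mxE /dirichlet_matrix.
  under eq_bigr => i _ do rewrite mxE mulrBr.
  rewrite sumrB (bigD1 j) //= eqxx mulr1 big1 ?addr0; last first.
    by move=> i ij; rewrite (negbTE ij) mulr0.
  by move=> E; rewrite mulrBl mul1r -E opprB addrC subrK.
have key j : \sum_(i < size s) Defs.P c (pt j) (pt i) * f (pt i) = (1 - l) * f (pt j).
  rewrite fpt mulrA -eig mulr_suml; apply: eq_bigr => i _.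
  rewrite fpt /Defs.P (csym (pt j)); ring.
have Een : energy c Om f = l * norm2 c Om f.
  rewrite /energy /norm2 -/s !bt mulr_sumr; apply: eq_bigr => j _.
  rewrite bt key; ring.
have /existsP [j vj] : [exists j, v 0 j != 0].
  apply: contraR v0 => /existsPn H; apply/eqP/rowP => j; rewrite !mxE.
  exact/eqP/negPn/H.
have fj : f (pt j) != 0 by rewrite fpt mulf_neq0 // invr_eq0.
have n2 : norm2 c Om f != 0.
  rewrite /norm2 -/s bt (bigD1 j) //=.
  have t0 : 0 < Defs.pi c (pt j) * f (pt j) ^+ 2.
    by rewrite mulr_gt0 ?n_pi_gt0 // lt_def sqr_ge0 sqrf_eq0 fj.
  have r0 : 0 <= \sum_(i < size s | i != j) Defs.pi c (tnth (in_tuple s) i) * f (tnth (in_tuple s) i) ^+ 2.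
    by apply: sumr_ge0 => i _; rewrite mulr_ge0 ?sqr_ge0 // ltW // n_pi_gt0.
  by rewrite gt_eqF //; lra.
apply: lmin_le => //; exists Om, f; split => //.
  by exists (pt j) => //; rewrite mem_tnth.
by rewrite Een mulfK.
Qed.


Lemma cheb (R : realFieldType) (k : nat) (a b : nat -> R) :
  (forall i j, (i <= j)%N -> (j < k)%N -> a j <= a i /\ b j <= b i) ->
  (\sum_(i < k) a i) * (\sum_(i < k) b i) <= k%:R * \sum_(i < k) a i * b i.
Proof.
move=> mono.
set A := \sum_(i < k) a i; set B := \sum_(i < k) b i; set S := \sum_(i < k) a i * b i.
have pos : 0 <= \sum_(i < k) \sum_(j < k) (a i - a j) * (b i - b j).
  apply: sumr_ge0 => i _; apply: sumr_ge0 => j _.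
  have [ij|ji] := leqP i j.
    have [h1 h2] := mono i j ij (ltn_ord j).
    by rewrite mulr_ge0 // subr_ge0.
  have [h1 h2] := mono j i (ltnW ji) (ltn_ord i).
  by rewrite mulr_le0 // subr_le0.
have inner i : \sum_(j < k) (a i - a j) * (b i - b j)
     = k%:R * (a i * b i) + S - a i * B - b i * A.
  have -> : \sum_(j < k) (a i - a j) * (b i - b j)
     = \sum_(j < k) (a i * b i) + \sum_(j < k) a j * b j
       - \sum_(j < k) a i * b j - \sum_(j < k) b i * a j.
    rewrite -!big_split /= -!sumrB; apply: eq_bigr => j _; ring.
  by rewrite sumr_const card_ord -!mulr_sumr mulr_natl.
have outer : \sum_(i < k) \sum_(j < k) (a i - a j) * (b i - b j)
     = \sum_(i < k) (k%:R * (a i * b i)) + \sum_(i < k) S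
       - \sum_(i < k) a i * B - \sum_(i < k) b i * A.
  rewrite -!big_split /= -!sumrB; apply: eq_bigr => i _; exact: inner.
move: pos; rewrite outer sumr_const card_ord -mulr_sumr -!mulr_suml -/A -/B -/S.
rewrite -mulr_natl; lra.
Qed.


Lemma main_alg (R : realFieldType) (l : seq R) (k : nat) (C m : R) :
  sorted <=%R l -> (0 < k)%N -> (k < size l)%N ->
  (forall i, (i < size l)%N -> m <= l`_i) ->
  \sum_(i < size l) l`_i <= (size l)%:R ->
  0 <= C -> l`_k.-1 <= 1 + C ->
  \sum_(i < k) (l`_k - l`_i) ^+ 2 * (1 - l`_i)
      <= C * \sum_(i < k) (l`_k - l`_i) * (l`_i - m) ->
  l`_k - l`_k.-1 <= C * (\sum_(i < k) (l`_i - m)) / (\sum_(i < k) (1 - l`_i)).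
Proof.
move=> Hs k0 kn Hm HT C0 Hl1 Y.
set n := size l in kn Hm HT.
have srt i j : (i <= j)%N -> (j < n)%N -> l`_i <= l`_j.
  move=> ij jn; apply: (sorted_leq_nth le_trans lexx 0 Hs) => //.
    by rewrite inE (leq_ltn_trans ij jn).
set L := l`_k in Y *; set l1 := l`_k.-1 in Hl1 *.
have kk : k.-1.+1 = k by rewrite prednK.
have Li i : (i < k)%N -> l`_i <= l1.
  move=> ik; apply: srt; first by rewrite -ltnS kk.
  by rewrite (leq_ltn_trans (leq_pred k)).
have l1L : l1 <= L by apply: srt => //; exact: leq_pred.
set A := \sum_(i < k) (l`_i - m); set B := \sum_(i < k) (1 - l`_i).
set d := L - l1.
have d0 : 0 <= d by rewrite subr_ge0.
have A0 : 0 <= A.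
  apply: sumr_ge0 => i _; rewrite subr_ge0; apply: Hm.
  exact: ltn_trans (ltn_ord i) kn.
set s := \sum_(i < k) l`_i.
have EB : B = k%:R - s by rewrite /B sumrB sumr_const card_ord -mulr_natl mulr1.
have hs : s <= k%:R * l1.
  apply: (@le_trans _ _ (\sum_(i < k) l1)); first by apply: ler_sum => i _; apply: Li.
  by rewrite sumr_const card_ord mulr_natl.
have hT : s + (n - k)%:R * L <= n%:R.
  apply: le_trans HT.
  rewrite /s -!(big_mkord xpredT (fun i => l`_i)) (@big_cat_nat _ _ _ k 0 n) //=; last exact: ltnW.
  rewrite lerD2l mulr_natl -sumr_const_nat.
  by apply: ler_sum_nat => i /andP [ki iN]; apply: srt.
have kR : 0 < k%:R :> R by rewrite ltr0n.
have nkR : (n - k)%:R = n%:R - k%:R :> R by rewrite natrB // ltnW.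
have nkpos : 0 < n%:R - k%:R :> R by rewrite subr_gt0 ltr_nat.
rewrite nkR in hT.
have [Bpos|Bneg] := ltP 0 B; last first.
  have l1ge : 1 <= l1.
    rewrite -(ler_pM2l kR) mulr1; apply: le_trans hs; lra.
  have Lle : L <= 1.
    rewrite -(ler_pM2l nkpos) mulr1; lra.
  have B0 : B = 0.
    apply/eqP; rewrite eq_le Bneg /=.
    have : s <= k%:R * 1 by apply: le_trans hs _; rewrite ler_pM2l //; lra.
    lra.
  by rewrite B0 invr0 mulr0 /d; lra.
rewrite ler_pdivlMr //.
have [dpos|dle] := ltP 0 d; last first.
  have -> : d = 0 by apply/eqP; rewrite eq_le dle d0.
  by rewrite mul0r mulr_ge0.
pose x i := L - l`_i.
pose h i := x i * (1 - l`_i) - C * (l`_i - m).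
pose y i := l1 - l`_i.
have ordle i j : (i <= j)%N -> (j < k)%N -> l`_i <= l`_j.
  move=> ij jk; apply: srt => //; exact: ltn_trans jk kn.
have Y0 : \sum_(i < k) x i * h i <= 0.
  have -> : \sum_(i < k) x i * h i = \sum_(i < k) (l`_k - l`_i) ^+ 2 * (1 - l`_i)
       - C * \sum_(i < k) (l`_k - l`_i) * (l`_i - m).
    rewrite mulr_sumr -sumrB; apply: eq_bigr => i _; rewrite /h /x /L; ring.
  lra.
have c1 := @cheb R k x h.
have c1' : (\sum_(i < k) x i) * (\sum_(i < k) h i) <= 0.
  apply: le_trans (c1 _) _.
    move=> i j ij jk; have lij := ordle i j ij jk; have lj1 := Li j jk.
    split; first by rewrite /x; lra.
    have -> : h j = h i - (l`_j - l`_i) * (1 + C + L - l`_i - l`_j) by rewrite /h /x; ring.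
    rewrite lerBlDr lerDl; apply: mulr_ge0; lra.
  by rewrite pmulr_rle0 // ltr0n.
have Sx : k%:R * d <= \sum_(i < k) x i.
  apply: (@le_trans _ _ (\sum_(i < k) d)); first by rewrite sumr_const card_ord mulr_natl.
  apply: ler_sum => i _; rewrite /x /d; have := Li i (ltn_ord i); lra.
have Sxpos : 0 < \sum_(i < k) x i by apply: lt_le_trans Sx; rewrite mulr_gt0.
have Sh : \sum_(i < k) h i <= 0 by rewrite -(pmulr_rle0 _ Sxpos).
have Eh : \sum_(i < k) h i = \sum_(i < k) x i * (1 - l`_i) - C * A.
  by rewrite /A mulr_sumr -sumrB.
have c2 := @cheb R k y (fun i => 1 - l`_i).
have c2' : (\sum_(i < k) y i) * B <= k%:R * \sum_(i < k) y i * (1 - l`_i).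
  apply: c2 => i j ij jk; have lij := ordle i j ij jk.
  by split; rewrite /y; lra.
have Sy : 0 <= \sum_(i < k) y i.
  apply: sumr_ge0 => i _; rewrite /y subr_ge0; exact: Li.
have Sy2 : 0 <= \sum_(i < k) y i * (1 - l`_i).
  rewrite -(pmulr_rge0 _ kR); apply: le_trans c2'; exact: mulr_ge0 Sy (ltW Bpos).
have Ex : \sum_(i < k) x i * (1 - l`_i) = d * B + \sum_(i < k) y i * (1 - l`_i).
  rewrite /B mulr_sumr -big_split /=; apply: eq_bigr => i _; rewrite /x /y /d; ring.
lra.
Qed.


Lemma dir_size (R : realType) (V : countType) (c : V -> V -> R) Om lam :
  dirichlet_eigenvalues c Om lam -> size lam = size (enum_fset Om).
Proof.
case=> _ E; have := size_char_poly (dirichlet_matrix c Om).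
by rewrite E size_prod_XsubC => -[].
Qed.

Lemma dir_root (R : realType) (V : countType) (c : V -> V -> R) Om lam l :
  dirichlet_eigenvalues c Om lam -> l \in lam ->
  root (char_poly (dirichlet_matrix c Om)) l.
Proof. by case=> _ ->; rewrite root_prod_XsubC. Qed.

Lemma P_ge0 (R : realType) (V : countType) (c : V -> V -> R) x y :
  is_network c -> 0 <= Defs.P c x y.
Proof.
move=> Hn; have [_ c0 _ _] := Hn.
by rewrite /Defs.P divr_ge0 // ltW // n_pi_gt0.
Qed.

Lemma dir_trace (R : realType) (V : countType) (c : V -> V -> R) Om lam :
  is_network c -> dirichlet_eigenvalues c Om lam -> (0 < size lam)%N ->
  \sum_(i < size lam) lam`_i <= (size lam)%:R.
Proof.
move=> Hn He sz; have Es := dir_size He; have [_ E] := He.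
have h1 := coefPn_prod_XsubC (ps := lam).
have h2 := char_poly_trace (dirichlet_matrix c Om).
rewrite -E Es in h1; rewrite Es in sz.
have Tr : \sum_(p <- lam) p = \tr (dirichlet_matrix c Om).
  by apply/eqP; rewrite -eqr_opp -h2 // -h1 // -Es lt0n_neq0 // Es.
have -> : \sum_(i < size lam) lam`_i = \sum_(p <- lam) p by rewrite (big_nth 0) big_mkord.
rewrite Tr Es /mxtrace.
apply: (@le_trans _ _ (\sum_(i < size (enum_fset Om)) 1)); last by rewrite sumr_const card_ord.
apply: ler_sum => i _; rewrite mxE eqxx lerBlDr lerDl; exact: P_ge0.
Qed.


Lemma det2 (R : comNzRingType) (M : 'M[R]_2) :
  \det M = M 0 0 * M 1 1 - M 0 1 * M 1 0.
Proof.
rewrite (expand_det_row _ 0) !big_ord_recl big_ord0 /cofactor !det_mx11 !mxE /=.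
have e1 : lift (0 : 'I_2) (0 : 'I_1) = 1 by apply/val_inj.
have e2 : lift (1 : 'I_2) (0 : 'I_1) = 0 by apply/val_inj.
rewrite !e1 /= e2 /bump /= expr0 expr1; ring.
Qed.

Lemma tr_det2 (R : comNzRingType) n (M : 'M[R]_n) (i0 i1 : 'I_n) :
  (n = 2)%N -> i0 != i1 ->
  \tr M = M i0 i0 + M i1 i1 /\ \det M = M i0 i0 * M i1 i1 - M i0 i1 * M i1 i0.
Proof.
move=> e ne; subst n.
have tr2 : \tr M = M 0 0 + M 1 1.
  rewrite /mxtrace !big_ord_recl big_ord0 addr0.
  by have -> : lift ord0 (ord0 : 'I_1) = 1 :> 'I_2 by apply/val_inj.
have [[-> ->]|[-> ->]] : (i0 = 0 /\ i1 = 1) \/ (i0 = 1 /\ i1 = 0).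
- move: i0 i1 ne => [[|[|k0]] p0] [[|[|k1]] p1] ne //;
    try (by move: ne; rewrite -val_eqE);
    try (by left; split; apply/val_inj);
    try (by right; split; apply/val_inj).
- by rewrite tr2 det2.
- by rewrite tr2 det2 addrC; split => //; ring.
Qed.

Lemma char2_eq (R : comNzRingType) n (M : 'M[R]_n) (u v : R) :
  (n = 2)%N -> u + v = \tr M -> u * v = \det M ->
  char_poly M = \prod_(p <- [:: u; v]) ('X - p%:P).
Proof.
move=> e; subst n => Et Ed.
have sp := size_char_poly M.
have sq := size_prod_XsubC [:: u; v] id.
apply/polyP => i; case: i => [|[|[|i]]].
- rewrite char_poly_det coef0_prod_XsubC /= !big_cons big_nil mulr1 -Ed.
  by rewrite expr2 mulrNN mul1r.
- have := coefPn_prod_XsubC (ps := [:: u; v]) isT; rewrite /= => ->.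
  by rewrite (char_poly_trace M) // !big_cons big_nil addr0 Et.
- have h1 := char_poly_monic M; have h2 := monic_prod_XsubC [:: u; v] xpredT id.
  move/monicP: h1; move/monicP: h2; rewrite /lead_coef sp /=.
  by rewrite sq /= => -> ->.
- rewrite !nth_default //; first by rewrite sq.
  by rewrite sp.
Qed.


Lemma roots2 (R : realType) (p q r s : R) : 0 < q * r ->
  exists u v, [/\ u < v, u < p, u < s, u + v = p + s & u * v = p * s - q * r].
Proof.
move=> qr.
set D := (p - s) ^+ 2 + 4 * (q * r).
have D0 : 0 <= D by rewrite /D addr_ge0 ?sqr_ge0 // mulr_ge0 // ltW.
set t := Num.sqrt D.
have t0 : 0 <= t by exact: sqrtr_ge0.
have t2 : t ^+ 2 = D by rewrite sqr_sqrtr.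
have sq1 : (p - s) ^+ 2 < t ^+ 2 by rewrite t2 /D ltrDl mulr_gt0.
have sq2 : (p - s) * (p - s) < t * t by rewrite -!expr2.
have sq0 : 0 <= (p - s) * (p - s) by rewrite -expr2 sqr_ge0.
have tpos : 0 < t by nra.
have h1 : s - p < t by nra.
have h2 : p - s < t by nra.
exists ((p + s - t) / 2), ((p + s + t) / 2); split.
- by rewrite ltr_pM2r ?invr_gt0 //; lra.
- rewrite ltr_pdivrMr //; lra.
- rewrite ltr_pdivrMr //; lra.
- by field.
- have -> : (p + s - t) / 2 * ((p + s + t) / 2) = ((p + s) ^+ 2 - t ^+ 2) / 4 by field.
  by rewrite t2 /D; field.
Qed.

Lemma pair_C (R : realType) (V : countType) (c : V -> V -> R) (C : R) (a y : V) :
  is_network c -> yang_type c C -> a != y -> 0 < c a y -> 0 < C.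
Proof.
move=> Hn HY ay cay.
have [csym c0 _ _] := Hn.
set Om2 := [fset a; y]%fset.
set s := enum_fset Om2.
have sz : size s = 2%N by have := cardfs2 a y; rewrite ay.
have lt0 : (0 < size s)%N by rewrite sz.
have lt1 : (1 < size s)%N by rewrite sz.
pose i0 := Ordinal lt0; pose i1 := Ordinal lt1.
have ne : i0 != i1 by rewrite -val_eqE.
set M := dirichlet_matrix c Om2.
pose pt := tnth (in_tuple s).
have inj : injective pt by apply/tuple_uniqP; exact: fset_uniq.
have Mij i j : M i j = (i == j)%:R - Defs.P c (pt i) (pt j) by rewrite /M /dirichlet_matrix mxE.
have ptne : pt i0 != pt i1 by apply: contra ne => /eqP/inj ->.
have mem i : pt i = a \/ pt i = y.
  have : pt i \in Om2 by rewrite mem_tnth.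
  by rewrite !inE => /orP [/eqP -> | /eqP ->]; [left|right].
have cpos : 0 < c (pt i0) (pt i1).
  case: (mem i0) (mem i1) ptne => -> [] -> //; rewrite ?eqxx //.
  by rewrite csym.
have piN0 x : Defs.pi c x != 0 by rewrite gt_eqF // n_pi_gt0.
have qr : 0 < M i0 i1 * M i1 i0.
  rewrite !Mij (negbTE ne) eq_sym (negbTE ne) /= !sub0r mulrNN /Defs.P (csym (pt i1)).
  by rewrite !mulr_gt0 // invr_gt0 n_pi_gt0.
have [u [v [uv up us Es Ep]]] := @roots2 _ (M i0 i0) (M i0 i1) (M i1 i0) (M i1 i1) qr.
have [Etr Edet] := tr_det2 M sz ne.
have ch : char_poly M = \prod_(p <- [:: u; v]) ('X - p%:P).
  by apply: char2_eq sz _ _; rewrite ?Etr ?Edet.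
have De : dirichlet_eigenvalues c Om2 [:: u; v].
  by split => //=; rewrite andbT ltW.
have kk : (1 < #|` Om2|)%N by rewrite -/s sz.
have := HY Om2 [:: u; v] De 1%N kk; rewrite /= !big_ord1 /=.
have um : lambda_min c <= u.
  by apply: (eig_ge_lmin Hn); apply: (dir_root De); rewrite mem_head.
have u1 : u < 1.
  apply: lt_le_trans up _; rewrite Mij eqxx lerBlDr lerDl; exact: P_ge0.
move=> H.
rewrite ltNge; apply/negP => C0.
have h1 : C * ((v - u) * (u - lambda_min c)) <= 0.
  by rewrite mulr_le0_ge0 // mulr_ge0 // subr_ge0 // ltW.
have h2 : 0 < (v - u) ^+ 2 * (1 - u).
  by rewrite mulr_gt0 ?exprn_gt0 // subr_gt0.
lra.
Qed.


Unset Implicit Arguments. Set Strict Implicit.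

(* lam`_(i-1) is the paper's lambda_i; the paper's k (1 <= k < |Om|). *)
Theorem corollary5p4 (R : realType) (V : countType) (c : V -> V -> R)
    (C_YT : R) (Om : {fset V}) (lam : seq R) (k : nat) :
  is_network c -> yang_type c C_YT ->
  dirichlet_eigenvalues c Om lam ->
  (1 <= k)%N -> (k < #|` Om|)%N ->
  lam`_k.-1 <= 1 + C_YT ->
  lam`_k - lam`_k.-1 <=
    C_YT * (\sum_(i < k) (lam`_i - lambda_min c))
         / (\sum_(i < k) (1 - lam`_i)).
Proof.
move=> Hn HY He k1 kn Hl1.
have Es := dir_size He.
have kl : (k < size lam)%N by rewrite Es.
have [C0|Cneg] := leP 0 C_YT.
  apply: main_alg => //.
  - by case: He.
  - move=> i il; apply: (eig_ge_lmin Hn); apply: (dir_root He).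
    exact: (mem_nth 0 il).
  - by apply: (dir_trace Hn He); exact: leq_ltn_trans kl.
  - exact: (HY Om lam He k kn).
have [csym c0 _ _] := Hn.
have noedge x z : x != z -> c x z = 0.
  move=> xz; have [//|cn] := eqVneq (c x z) 0.
  have : 0 < c x z by rewrite lt_def cn c0.
  move/(pair_C Hn HY xz) => ?; lra.
have Pd x z : Defs.P c x z = (x == z)%:R.
  have pix : Defs.pi c x = c x x.
    by apply: n_pi_degen => // w wx; apply: noedge; rewrite eq_sym.
  rewrite /Defs.P; case: eqP => [<-|/eqP xz]; last by rewrite noedge // mul0r.
  by rewrite -pix divff // gt_eqF // n_pi_gt0.
have M0 : dirichlet_matrix c Om = 0.
  apply/matrixP => i j; rewrite !mxE Pd.
  have inj : injective (tnth (in_tuple (enum_fset Om))).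
    by apply/tuple_uniqP; exact: fset_uniq.
  case: (i =P j) => [->|ij]; first by rewrite eqxx subrr.
  case: eqP => [/inj e|_]; first by case: ij.
  by rewrite subrr.
have l0 i : (i < size lam)%N -> lam`_i = 0.
  move=> il; have := dir_root He (mem_nth 0 il).
  rewrite -eigenvalue_root_char M0 => /eigenvalueP [v].
  rewrite mulmx0 => /esym /eqP; rewrite scaler_eq0 => /orP [/eqP //|].
  by move=> /eqP ->; rewrite eqxx.
rewrite l0 // l0; last exact: leq_ltn_trans (leq_pred k) kl.
rewrite subrr; apply: divr_ge0.
  apply: mulr_le0 => //; first exact: ltW.
  apply: sumr_le0 => i _; rewrite l0 ?sub0r ?oppr_le0 ?lmin_ge0 //.
  exact: ltn_trans (ltn_ord i) kl.
apply: sumr_ge0 => i _; rewrite l0 ?subr0 //.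
exact: ltn_trans (ltn_ord i) kl.
Qed.
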